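(* Fix an odd integer $u>0$. If the family $\mathcal{K}_2$ (for this $u$) is finite, then the family $\mathcal{K}_3$ (for this $u$) is finite.
   Context: For an odd prime $p$ put $p^*=(-1)^{(p-1)/2}p$; let $P^*=\{8,-4,-8\}\cup\{p^*: p\text{ odd prime}\}$, $P^*_+$ its positive and $P^*_-$ its negative elements. $E(K)$ denotes the exponent of the class group of a number field $K$. $\mathcal{K}_1$ is the family of fields $\mathbb{Q}(\sqrt{p^*})$ with $p^*\in P^*_-$ and $E(\mathbb{Q}(\sqrt{p^*}))\mid u$. $\mathcal{K}_2$ is the family of fields $\mathbb{Q}(\sqrt{p_1^*},\sqrt{p_2^*})$ with $p_1^*\in P^*_-$, $p_2^*\in P^*$, $E(\mathbb{Q}(\sqrt{p_1^*}))\mid u$, and either ($p_2^*<0$ and $E(\mathbb{Q}(\sqrt{p_2^*}))\mid u$) or ($p_2^*>0$ and $E(\mathbb{Q}(\sqrt{p_1^*p_2^*}))\mid 2u$). $\mathcal{K}_3$ is the family of fields $\mathbb{Q}(\sqrt{p_1^*},\sqrt{p_2^*},\sqrt{p_3^*})$ with $p_1^*,p_2^*\in P^*_-$, $p_3^*\in P^*$, such that $\mathbb{Q}(\sqrt{p_1^*},\sqrt{p_2^*})$, $\mathbb{Q}(\sqrt{p_1^*},\sqrt{p_3^*})$ and $\mathbb{Q}(\sqrt{p_2^*},\sqrt{p_3^*})$ all belong to $\mathcal{K}_2$. *)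

(* Defs.v *)
(* number fields are realised as subsets of algC. *)
From HB Require Import structures.
From mathcomp Require Import all_boot all_order all_algebra all_field.
Set Implicit Arguments. Unset Strict Implicit. Unset Printing Implicit Defensive.
Import Order.TTheory GRing.Theory Num.Theory.
Local Open Scope ring_scope.

Definition pstar (p : nat) : int := (-1) ^+ ((p - 1) %/ 2)%N * (p%:Z).
Definition inPstar (d : int) : Prop :=
  d = 8 \/ d = -4 \/ d = -8 \/ exists p : nat, [/\ prime p, odd p & d = pstar p].
Definition inPstar_pos (d : int) : Prop := inPstar d /\ 0 < d.
Definition inPstar_neg (d : int) : Prop := inPstar d /\ d < 0.

(* The number field Q(sqrt d_1, ..., sqrt d_k) inside algC: the Q-span of the
   products of the chosen square roots sqrtC d_i. *)
Definition Kfield (ds : seq int) (z : algC) : Prop :=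
  exists f : {ffun {set 'I_(size ds)} -> rat},
    z = \sum_(S : {set 'I_(size ds)}) ratr (f S) * \prod_(i in S) sqrtC ((ds`_i)%:~R).

Definition alg_int (z : algC) : Prop :=
  exists p : {poly int}, p \is monic /\ root (map_poly intr p) z.

Definition OK (ds : seq int) (z : algC) : Prop := Kfield ds z /\ alg_int z.

Definition is_ideal (ds : seq int) (I : algC -> Prop) : Prop :=
  [/\ forall z, I z -> OK ds z,
      I 0,
      forall x y, I x -> I y -> I (x + y),
      forall r x, OK ds r -> I x -> I (r * x)
    & exists x, I x /\ x != 0].

(* n-th power of an ideal (for n >= 1): sums of products of n elements of I *)
Definition idealPow (I : algC -> Prop) (n : nat) (z : algC) : Prop :=
  exists s : seq (seq algC),
    [/\ forall t, t \in s -> size t = n,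
        forall t x, t \in s -> x \in t -> I x
      & z = \sum_(t <- s) \prod_(x <- t) x].

Definition principal (ds : seq int) (J : algC -> Prop) : Prop :=
  exists a, OK ds a /\ forall z, J z <-> exists b, OK ds b /\ z = a * b.

(* E(K) | n : the n-th power of every ideal class is trivial, i.e. the n-th
   power of every nonzero integral ideal of O_K is principal. *)
Definition exp_dvd (ds : seq int) (n : nat) : Prop :=
  forall I, is_ideal ds I -> principal ds (idealPow I n).

Definition same_field (ds es : seq int) : Prop :=
  forall z, Kfield ds z <-> Kfield es z.

Definition K2cond (u : nat) (p1 p2 : int) : Prop :=
  [/\ inPstar_neg p1, inPstar p2, exp_dvd [:: p1] u &
      (p2 < 0 /\ exp_dvd [:: p2] u) \/ (0 < p2 /\ exp_dvd [:: p1 * p2] (2 * u))].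

Definition inK2 (u : nat) (ds : seq int) : Prop :=
  exists q1 q2, K2cond u q1 q2 /\ same_field [:: q1; q2] ds.

Definition K3cond (u : nat) (p1 p2 p3 : int) : Prop :=
  [/\ inPstar_neg p1, inPstar_neg p2 & inPstar p3] /\
  [/\ inK2 u [:: p1; p2], inK2 u [:: p1; p3] & inK2 u [:: p2; p3]].

Definition K2_finite (u : nat) : Prop :=
  exists L : seq (seq int), forall p1 p2, K2cond u p1 p2 ->
    exists2 ds, ds \in L & same_field [:: p1; p2] ds.

Definition K3_finite (u : nat) : Prop :=
  exists L : seq (seq int), forall p1 p2 p3, K3cond u p1 p2 p3 ->
    exists2 ds, ds \in L & same_field [:: p1; p2; p3] ds.

(* Main.v *)
Require Import Defs.
From mathcomp Require Import all_boot all_order all_algebra all_field.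
From Stdlib Require Import ClassicalEpsilon.
Set Implicit Arguments. Unset Strict Implicit. Unset Printing Implicit Defensive.
Import Order.TTheory GRing.Theory Num.Theory.

Section Aux.
Local Open Scope ring_scope.

Definition Mon (ds : seq int) (S : {set 'I_(size ds)}) : algC :=
  \prod_(i in S) sqrtC ((ds`_i)%:~R).

Lemma Kfield0 ds : Kfield ds 0.
Proof.
exists [ffun => 0]; rewrite big1 // => S _; by rewrite ffunE rmorph0 mul0r.
Qed.

Lemma KfieldD ds x y : Kfield ds x -> Kfield ds y -> Kfield ds (x + y).
Proof.
move=> [f ->] [g ->]; exists [ffun S => f S + g S].
rewrite -big_split /=; apply: eq_bigr => S _.
by rewrite ffunE rmorphD mulrDl.
Qed.

Lemma Kfield_sum ds (I : finType) (F : I -> algC) :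
  (forall i, Kfield ds (F i)) -> Kfield ds (\sum_i F i).
Proof.
move=> H; apply: (big_ind (Kfield ds)) => //; [exact: Kfield0|exact: KfieldD].
Qed.

Lemma KfieldZ ds r x : Kfield ds x -> Kfield ds (ratr r * x).
Proof.
move=> [f ->]; exists [ffun S => r * f S].
rewrite mulr_sumr; apply: eq_bigr => S _.
by rewrite ffunE rmorphM mulrA.
Qed.

Lemma Kfield_mon ds r (S : {set 'I_(size ds)}) : Kfield ds (ratr r * Mon S).
Proof.
exists [ffun T => if T == S then r else 0].
rewrite (bigD1 S) //= ffunE eqxx.
rewrite [X in _ = _ + X]big1 ?addr0 // => T /negbTE TS.
by rewrite ffunE TS rmorph0 mul0r.
Qed.

Lemma Kfield_sqrt_mon ds (i : 'I_(size ds)) (S : {set 'I_(size ds)}) :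
  Kfield ds (sqrtC ((ds`_i)%:~R) * Mon S).
Proof.
case: (boolP (i \in S)) => iS.
  rewrite /Mon (big_setD1 _ iS) /= mulrA -expr2 sqrtCK -ratr_int.
  exact: Kfield_mon.
have := Kfield_mon 1 (i |: S).
by rewrite /Mon (big_setU1 _ iS) /= rmorph1 mul1r.
Qed.

Lemma Kfield_min ds (P : algC -> Prop) :
  (forall x y, P x -> P y -> P (x + y)) ->
  (forall x y, P x -> P y -> P (x * y)) ->
  (forall r : rat, P (ratr r)) ->
  (forall i, (i < size ds)%N -> P (sqrtC ((ds`_i)%:~R))) ->
  forall z, Kfield ds z -> P z.
Proof.
move=> HD HM HR HS z [f ->].
have P0 : P 0 by have := HR 0; rewrite rmorph0.
have P1 : P 1 by have := HR 1; rewrite rmorph1.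
apply: (big_ind P) => //.
move=> S _; apply: (HM); first exact: HR.
apply: (big_ind P) => //.
move=> i Hi.
exact: HS (ltn_ord i).
Qed.

Lemma KfieldM ds x y : Kfield ds x -> Kfield ds y -> Kfield ds (x * y).
Proof.
move=> Hx; move: x Hx y.
apply: (Kfield_min (P := fun x => forall y, Kfield ds y -> Kfield ds (x * y))).
- by move=> a b Ha Hb y Hy; rewrite mulrDl; apply: KfieldD; auto.
- by move=> a b Ha Hb y Hy; rewrite -mulrA; auto.
- by move=> r y Hy; exact: KfieldZ.
- move=> i Hi y [f ->]; rewrite mulr_sumr; apply: Kfield_sum => S.
  rewrite mulrCA; apply: KfieldZ.
  exact: (Kfield_sqrt_mon (Ordinal Hi) S).
Qed.

Lemma Kfield_rat ds r : Kfield ds (ratr r).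
Proof.
have := Kfield_mon r (set0 : {set 'I_(size ds)}).
by rewrite /Mon big_set0 mulr1.
Qed.

Lemma Kfield_sqrt ds i : (i < size ds)%N -> Kfield ds (sqrtC ((ds`_i)%:~R)).
Proof.
move=> Hi; have := Kfield_mon 1 [set Ordinal Hi].
by rewrite /Mon big_set1 rmorph1 mul1r.
Qed.

Lemma Kfield_sub ds es :
  (forall i, (i < size ds)%N -> Kfield es (sqrtC ((ds`_i)%:~R))) ->
  forall z, Kfield ds z -> Kfield es z.
Proof.
move=> H; apply: Kfield_min => //.
- exact: KfieldD.
- exact: KfieldM.
- exact: Kfield_rat.
Qed.

Lemma sub12 (a b c : int) z : Kfield [:: a; b] z -> Kfield [:: a; b; c] z.
Proof.
apply: Kfield_sub => -[|[|i]] //= _.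
- exact: (@Kfield_sqrt [:: a; b; c] 0).
- exact: (@Kfield_sqrt [:: a; b; c] 1).
Qed.

Lemma sub13 (a b c : int) z : Kfield [:: a; c] z -> Kfield [:: a; b; c] z.
Proof.
apply: Kfield_sub => -[|[|i]] //= _.
- exact: (@Kfield_sqrt [:: a; b; c] 0).
- exact: (@Kfield_sqrt [:: a; b; c] 2).
Qed.

Lemma incl3 (a b c a' b' c' : int) :
  same_field [:: a; b] [:: a'; b'] -> same_field [:: a; c] [:: a'; c'] ->
  forall z, Kfield [:: a; b; c] z -> Kfield [:: a'; b'; c'] z.
Proof.
move=> H1 H2; apply: Kfield_sub => -[|[|[|i]]] //= _.
- apply: sub12; apply/H1; exact: (@Kfield_sqrt [:: a; b] 0).
- apply: sub12; apply/H1; exact: (@Kfield_sqrt [:: a; b] 1).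
- apply: sub13; apply/H2; exact: (@Kfield_sqrt [:: a; c] 1).
Qed.

Lemma same3 (a b c a' b' c' : int) :
  same_field [:: a; b] [:: a'; b'] -> same_field [:: a; c] [:: a'; c'] ->
  same_field [:: a; b; c] [:: a'; b'; c'].
Proof.
move=> H1 H2 z; split; first exact: incl3.
apply: incl3 => w; [exact: iff_sym (H1 w)|exact: iff_sym (H2 w)].
Qed.

End Aux.

Theorem mainTheorem5 (u : nat) (hu0 : (0 < u)%N) (hodd : odd u) :
  K2_finite u -> K3_finite u.
Proof.
move=> [L HL].
pose Q (ds es t : seq int) := exists p1 p2 p3, [/\ K3cond u p1 p2 p3,
   same_field [:: p1; p2] ds, same_field [:: p1; p3] es & t = [:: p1; p2; p3]].
pose pick ds es := epsilon (inhabits [::]) (Q ds es).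
exists [seq pick ds es | ds <- L, es <- L].
move=> p1 p2 p3 HK.
have getL : forall x y, inK2 u [:: x; y] -> exists2 ds, ds \in L & same_field [:: x; y] ds.
  move=> x y [q1 [q2 [Hq Hs]]]; have [ds dsL Hd] := HL _ _ Hq.
  exists ds => // z; exact: iff_trans (iff_sym (Hs z)) (Hd z).
have HK' := HK; case: HK' => _ [H12 H13 _].
have [ds dsL Hd] := getL _ _ H12.
have [es esL He] := getL _ _ H13.
have HQ : Q ds es (pick ds es) by apply: epsilon_spec; exists [:: p1; p2; p3], p1, p2, p3.
exists (pick ds es); first exact: allpairs_f.
case: HQ => q1 [q2 [q3 [_ Hd' He' ->]]].
apply: same3 => z.
- exact: iff_trans (Hd z) (iff_sym (Hd' z)).
- exact: iff_trans (He z) (iff_sym (He' z)).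
Qed.
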